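(* Let $\mathcal{O}$ be a nonsymmetric operad and $\mathcal{O}^{\mathrm{Dend}}$ the associated operad. Define $\varphi_n:\mathcal{O}^{\mathrm{Dend}}(n)\to\mathcal{O}(n)$ by $\varphi_n(f^{[1]},\dots,f^{[n]})=f^{[1]}+\cdots+f^{[n]}$. Then $\varphi=\{\varphi_n\}_{n\ge1}:\mathcal{O}^{\mathrm{Dend}}\to\mathcal{O}$ is a morphism of nonsymmetric operads. In particular, if $(\pi_\prec,\pi_\succ)$ is a dendriform-multiplication on $\mathcal{O}$, then $\varphi$ induces a morphism of Gerstenhaber algebras $\varphi_*:H^\bullet_{(\pi_\prec,\pi_\succ)}(\mathcal{O}^{\mathrm{Dend}})\to H^\bullet_{\pi_{\mathrm{Tot}}}(\mathcal{O})$, where $\pi_{\mathrm{Tot}}=\pi_\prec+\pi_\succ$.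
   Context: $\mathbf{k}$ is a commutative unital ring of characteristic $0$; a nonsymmetric operad consists of $\mathbf{k}$-modules $\mathcal{O}(n)$, bilinear partial compositions $\circ_i$ and unit $\mathds{1}$ with the usual axioms; a morphism of operads is a family of linear maps commuting with all $\circ_i$ and preserving units. $C_n=\{[1],\dots,[n]\}$ formal symbols; $\mathcal{O}^{\mathrm{Dend}}(n)=\mathbf{k}[C_n]\otimes\mathcal{O}(n)$ with elements $f=(f^{[1]},\dots,f^{[n]})$, $f^{[r]}\in\mathcal{O}(n)$; partial compositions $(f\circ_i^{\mathrm{Dend}}g)^{[r]}=f^{R_0[r]}\circ_i g^{R_i[r]}$ for $1\le r\le m+n-1$, where $R_0[r]=[r]$ if $r\le i-1$, $[i]$ if $i\le r\le i+n-1$, $[r-n+1]$ if $r\ge i+n$; $R_i[r]=[r-i+1]$ if $i\le r\le i+n-1$ and $[1]+\cdots+[n]$ otherwise, with $g^{[1]+\cdots+[n]}:=g^{[1]}+\cdots+g^{[n]}$; unit $\mathds{1}^{[1]}$. A dendriform-multiplication is a pair $(\pi_\prec,\pi_\succ)$ in $\mathcal{O}(2)$ with $\pi_\prec\circ_1\pi_\prec=\pi_\prec\circ_2(\pi_\prec+\pi_\succ)$, $\pi_\prec\circ_1\pi_\succ=\pi_\succ\circ_2\pi_\prec$, $\pi_\succ\circ_1(\pi_\prec+\pi_\succ)=\pi_\succ\circ_2\pi_\succ$; then $(\pi_\prec,\pi_\succ)$ is a multiplication (i.e. $\pi\circ_1\pi=\pi\circ_2\pi$) on $\mathcal{O}^{\mathrm{Dend}}$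 and $\pi_\prec+\pi_\succ$ is a multiplication on $\mathcal{O}$. For an operad $\mathcal{P}$ with multiplication $\pi$: $\llbracket f,g\rrbracket=\sum_{i=1}^m(-1)^{(n-1)(i-1)}f\circ_i g-(-1)^{(m-1)(n-1)}\sum_{i=1}^n(-1)^{(m-1)(i-1)}g\circ_i f$ ($f\in\mathcal{P}(m)$, $g\in\mathcal{P}(n)$), $f\smile_\pi g=(-1)^{mn+1}(\pi\circ_2 g)\circ_1 f$, $\delta_\pi=\llbracket\pi,-\rrbracket$, and $H^\bullet_\pi(\mathcal{P})$ is the cohomology of $(\mathcal{P}(n),\delta_\pi)_{n\ge1}$, which is a Gerstenhaber algebra (graded-commutative associative product of degree $0$ plus a degree $-1$ graded Lie bracket satisfying the graded Leibniz rule) with product and bracket induced by $\smile_\pi$ and $\llbracket\,,\,\rrbracket$. $H^\bullet_{(\pi_\prec,\pi_\succ)}(\mathcal{O}^{\mathrm{Dend}})$ denotes $H^\bullet_{(\pi_\prec,\pi_\succ)}$ computed in $\mathcal{O}^{\mathrm{Dend}}$. A Gerstenhaber algebra morphism is a degree-preserving linear map preserving product and bracket. *)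

(* Defs.v *)
From HB Require Import structures.
From mathcomp Require Import all_boot all_order all_algebra.
Set Implicit Arguments.
Unset Strict Implicit.
Unset Printing Implicit Defensive.
Import GRing.Theory.
Local Open Scope ring_scope.

(* CONVENTION (degree shift): a graded family  P : nat -> lmodType R  is read
   with  P n  = the paper's  P(n+1)  (elements of arity n+1).  Partial compositions are indexed 1-based as in the paper:
   comp m n i f g = f o_i g, meaningful for 1 <= i <= m+1; it lands in
   P (m+n), the paper's P((m+1)+(n+1)-1). *)

Section Generic.
Variable R : comRingType.

Definition castP (P : nat -> lmodType R) (m n : nat) (e : m = n) (x : P m) : P n :=
  eq_rect m (fun k => P k) x n e.

Definition compT (P : nat -> lmodType R) :=
  forall m n : nat, nat -> P m -> P n -> P (m + n)%N.

Definition is_ns_operad (P : nat -> lmodType R) (comp : compT P) (one : P 0%N) : Prop :=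
  [/\ (forall m n i (a : R) (f f' : P m) (g : P n),
         comp m n i (a *: f + f') g = a *: comp m n i f g + comp m n i f' g),
      (forall m n i (a : R) (f : P m) (g g' : P n),
         comp m n i f (a *: g + g') = a *: comp m n i f g + comp m n i f g'),
      (forall m n p i j (f : P m) (g : P n) (h : P p),
         (1 <= i <= m.+1)%N -> (1 <= j <= n.+1)%N ->
         comp (m + n)%N p (i + j - 1)%N (comp m n i f g) h
         = castP (addnA m n p) (comp m (n + p)%N i f (comp n p j g h))),
      (forall m n p i j (f : P m) (g : P n) (h : P p),
         (1 <= i)%N -> (i < j)%N -> (j <= m.+1)%N ->
         comp (m + p)%N n i (comp m p j f h) g
         = castP (addnAC m n p) (comp (m + n)%N p (j + n)%N (comp m n i f g) h)) &
      (forall n (f : P n), comp 0%N n 1%N one f = castP (esym (add0n n)) f)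
      /\ (forall m i (f : P m), (1 <= i <= m.+1)%N ->
            comp m 0%N i f one = castP (esym (addn0 m)) f)].

Definition is_ns_operad_morphism (P Q : nat -> lmodType R)
    (compP : compT P) (oneP : P 0%N) (compQ : compT Q) (oneQ : Q 0%N)
    (phi : forall n, P n -> Q n) : Prop :=
  [/\ (forall n (a : R) (x y : P n), phi n (a *: x + y) = a *: phi n x + phi n y),
      (forall m n i (f : P m) (g : P n), (1 <= i <= m.+1)%N ->
         phi (m + n)%N (compP m n i f g) = compQ m n i (phi m f) (phi n g)) &
      phi 0%N oneP = oneQ].

Definition sgnr (V : lmodType R) (k : nat) (x : V) : V := if odd k then - x else x.

Unset Implicit Arguments.
Variables (P : nat -> lmodType R) (comp : compT P).
Set Implicit Arguments.

Definition gbrak (m n : nat) (f : P m) (g : P n) : P (m + n)%N :=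
  \sum_(i < m.+1) sgnr (n * i) (comp m n i.+1 f g)
  - sgnr (m * n) (\sum_(i < n.+1) sgnr (m * i) (castP (addnC n m) (comp n m i.+1 g f))).

Lemma cup_eq (m n : nat) : (1 + n + m = (m + n).+1)%N.
Proof. by rewrite add1n addSn addnC. Qed.

Definition gcup (pi : P 1%N) (m n : nat) (f : P m) (g : P n) : P (m + n).+1 :=
  sgnr ((m.+1 * n.+1).+1)
    (castP (cup_eq m n) (comp (1 + n)%N m 1%N (comp 1%N n 2%N pi g) f)).

Definition gdelta (pi : P 1%N) (n : nat) (f : P n) : P n.+1 :=
  castP (add1n n) (gbrak pi f).

Definition is_mult (pi : P 1%N) : Prop :=
  comp 1%N 1%N 1%N pi pi = comp 1%N 1%N 2%N pi pi.

Definition cocycle (pi : P 1%N) (n : nat) (x : P n) : Prop := gdelta pi x = 0.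

Definition coboundary (pi : P 1%N) (n : nat) : P n -> Prop :=
  match n as n0 return P n0 -> Prop with
  | 0%N => fun x => x = 0
  | k.+1 => fun x => exists y : P k, x = gdelta pi y
  end.

End Generic.

Section Dend.
Unset Implicit Arguments.
Variables (R : comRingType) (O : nat -> lmodType R) (comp : compT O).
Set Implicit Arguments.

(* O^Dend(n+1) = k[C_{n+1}] (x) O(n+1) : tuples indexed by 'I_n.+1
   (component j : 'I_n.+1 is the paper's f^{[j+1]}) *)
Definition Dend (n : nat) : lmodType R := {ffun 'I_n.+1 -> O n}.

(* 1-based access f^{[k]} *)
Definition dcomp (n : nat) (f : Dend n) (k : nat) : O n := f (inord k.-1).
Definition dsum (n : nat) (f : Dend n) : O n := \sum_(j < n.+1) f j.

(* partial composition of O^Dend; r = r0+1 is the paper's index [r] *)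
Definition dend_comp : compT Dend := fun m n i f g =>
  [ffun r0 : 'I_(m + n).+1 =>
     let r := r0.+1 in
     if (r < i)%N then comp m n i (dcomp f r) (dsum g)
     else if (r < i + n.+1)%N then comp m n i (dcomp f i) (dcomp g (r - i + 1))
     else comp m n i (dcomp f (r - n)) (dsum g)].

Definition dend_one (one : O 0%N) : Dend 0%N := [ffun _ => one].

Definition phiD (n : nat) (f : Dend n) : O n := dsum f.

Definition dend_pair (pl pr : O 1%N) : Dend 1%N :=
  [ffun j : 'I_2 => if j == ord0 then pl else pr].

Definition is_dend_mult (pl pr : O 1%N) : Prop :=
  [/\ comp 1%N 1%N 1%N pl pl = comp 1%N 1%N 2%N pl (pl + pr),
      comp 1%N 1%N 1%N pl pr = comp 1%N 1%N 2%N pr pl &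
      comp 1%N 1%N 1%N pr (pl + pr) = comp 1%N 1%N 2%N pr pr].

End Dend.

(* Main.v *)
Require Import Defs.
From HB Require Import structures.
From mathcomp Require Import all_boot all_order all_algebra.
From mathcomp Require Import zify.
Import GRing.Theory.
Local Open Scope ring_scope.

Section S.
Variables (R : comRingType) (O : nat -> lmodType R) (comp : compT O).
Hypothesis HL : forall m n i (a : R) (f f' : O m) (g : O n),
         comp m n i (a *: f + f') g = a *: comp m n i f g + comp m n i f' g.
Hypothesis HR : forall m n i (a : R) (f : O m) (g g' : O n),
         comp m n i f (a *: g + g') = a *: comp m n i f g + comp m n i f g'.

Lemma compL0 m n i (g : O n) : comp m n i 0 g = 0.
Proof.
have := HL m n i 1 0 0 g; rewrite !scale1r addr0 => H.
by apply: (addrI (comp m n i 0 g)); rewrite addr0 -H.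
Qed.
Lemma compR0 m n i (f : O m) : comp m n i f 0 = 0.
Proof.
have := HR m n i 1 f 0 0; rewrite !scale1r addr0 => H.
by apply: (addrI (comp m n i f 0)); rewrite addr0 -H.
Qed.
Lemma compLD m n i (f f' : O m) (g : O n) : comp m n i (f + f') g = comp m n i f g + comp m n i f' g.
Proof. by have := HL m n i 1 f f' g; rewrite !scale1r. Qed.
Lemma compRD m n i (f : O m) (g g' : O n) : comp m n i f (g + g') = comp m n i f g + comp m n i f g'.
Proof. by have := HR m n i 1 f g g'; rewrite !scale1r. Qed.

Lemma compL_sum m n i a b (F : nat -> O m) (g : O n) :
  comp m n i (\sum_(a <= r < b) F r) g = \sum_(a <= r < b) comp m n i (F r) g.
Proof. apply: (big_morph (fun f => comp m n i f g)) => [x y|]; [exact: compLD|exact: compL0]. Qed.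
Lemma compR_sum m n i a b (f : O m) (G : nat -> O n) :
  comp m n i f (\sum_(a <= r < b) G r) = \sum_(a <= r < b) comp m n i f (G r).
Proof. apply: (big_morph (fun g => comp m n i f g)) => [x y|]; [exact: compRD|exact: compR0]. Qed.

Lemma dsum_nat n (f : Dend O n) : dsum f = \sum_(0 <= r < n.+1) f (inord r).
Proof. by rewrite big_mkord; apply: eq_bigr => r _; rewrite inord_val. Qed.

Lemma phi_comp m n i (f : Dend O m) (g : Dend O n) : (1 <= i <= m.+1)%N ->
  dsum (dend_comp comp i f g) = comp m n i (dsum f) (dsum g).
Proof.
case: i => [//|j] /= Hj.
pose G r := (if (r.+1 < j.+1)%N then comp m n j.+1 (dcomp f r.+1) (dsum g)
     else if (r.+1 < j.+1 + n.+1)%N then comp m n j.+1 (dcomp f j.+1) (dcomp g (r.+1 - j.+1 + 1))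
     else comp m n j.+1 (dcomp f (r.+1 - n)) (dsum g)).
transitivity (\sum_(0 <= r < (m+n).+1) G r).
  by rewrite /dsum big_mkord; apply: eq_bigr => r _; rewrite ffunE.
rewrite (big_cat_nat _ (n:=j)) /=; [|lia|lia].
rewrite (big_cat_nat _ (m:=j) (n:=(j+n.+1)%N)) /=; [|lia|lia].
rewrite [dsum f]dsum_nat (big_cat_nat _ (m:=0%N) (n:=j) (p:=m.+1)) /=; [|lia|lia].
rewrite (big_cat_nat _ (m:=j) (n:=j.+1) (p:=m.+1)) /=; [|lia|lia].
rewrite big_nat1.
rewrite !compLD compL_sum.
congr (_ + _).
  apply: eq_big_nat => r Hr; rewrite /G ifT; last by lia.
  by rewrite /dcomp.
congr (_ + _).
  rewrite dsum_nat compR_sum -{1}[j]add0n big_addn addKn.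
  apply: eq_big_nat => r Hr; rewrite /G ifF; last by lia.
  rewrite ifT; last by lia.
  rewrite /dcomp /=; congr (comp _ _ _ (f (inord _)) (g (inord _))); lia.
rewrite compL_sum -{1}[(j + n.+1)%N]add0n big_addn -{1}[j.+1]add0n big_addn.
have -> : ((m + n).+1 - (j + n.+1) = m.+1 - j.+1)%N by lia.
apply: eq_big_nat => r Hr; rewrite /G ifF; last by lia.
rewrite ifF; last by lia.
rewrite /dcomp; congr (comp _ _ _ (f (inord _)) _); lia.
Qed.

Lemma dsum_lin n a (x y : Dend O n) : dsum (a *: x + y) = a *: dsum x + dsum y.
Proof. by rewrite /dsum scaler_sumr -big_split; apply: eq_bigr => j _; rewrite !ffunE. Qed.
Lemma dsumD n (x y : Dend O n) : dsum (x + y) = dsum x + dsum y.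
Proof. by have := dsum_lin n 1 x y; rewrite !scale1r. Qed.
Lemma dsum0 n : dsum (0 : Dend O n) = 0.
Proof. by rewrite /dsum big1 // => j _; rewrite ffunE. Qed.
Lemma dsumN n (x : Dend O n) : dsum (- x) = - dsum x.
Proof. by rewrite /dsum -sumrN; apply: eq_bigr => j _; rewrite !ffunE. Qed.
Lemma dsumB n (x y : Dend O n) : dsum (x - y) = dsum x - dsum y.
Proof. by rewrite dsumD dsumN. Qed.
Lemma dsum_sum n k (F : 'I_k -> Dend O n) : dsum (\sum_(i < k) F i) = \sum_(i < k) dsum (F i).
Proof. apply: (big_morph (@dsum _ _ n)) => [x y|]; [exact: dsumD|exact: dsum0]. Qed.
Lemma dsum_sgnr n k (x : Dend O n) : dsum (sgnr k x) = sgnr k (dsum x).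
Proof. by rewrite /sgnr; case: odd => //; rewrite dsumN. Qed.
Lemma dsum_cast m n (e : m = n) (x : Dend O m) : dsum (castP e x) = castP e (dsum x).
Proof. by case: n / e. Qed.

Lemma dsum_brak m n (x : Dend O m) (y : Dend O n) :
  dsum (gbrak (dend_comp comp) x y) = gbrak comp (dsum x) (dsum y).
Proof.
rewrite /gbrak dsumB dsum_sgnr dsum_sum dsum_sum; congr (_ - sgnr _ _).
  by apply: eq_bigr => i _; rewrite dsum_sgnr phi_comp //; case: i => /= i Hi; lia.
by apply: eq_bigr => i _; rewrite dsum_sgnr dsum_cast phi_comp //; case: i => /= i Hi; lia.
Qed.

Lemma dsum_cup (pi : Dend O 1) m n (x : Dend O m) (y : Dend O n) :
  dsum (gcup (dend_comp comp) pi x y) = gcup comp (dsum pi) (dsum x) (dsum y).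
Proof. by rewrite /gcup dsum_sgnr dsum_cast !phi_comp. Qed.

Lemma dsum_delta (pi : Dend O 1) n (x : Dend O n) :
  dsum (gdelta (dend_comp comp) pi x) = gdelta comp (dsum pi) (dsum x).
Proof. by rewrite /gdelta dsum_cast dsum_brak. Qed.

Lemma cast0 m n (e : m = n) : castP e (0 : O m) = 0.
Proof. by case: n / e. Qed.
Lemma sgnr0 k n : sgnr k (0 : O n) = 0.
Proof. by rewrite /sgnr; case: odd; rewrite ?oppr0. Qed.

Lemma cob0 (pi : O 1) n : coboundary comp pi (0 : O n).
Proof.
case: n => //= k; exists 0.
rewrite /gdelta /gbrak big1 => [|i _]; last by rewrite compR0 sgnr0.
rewrite big1 => [|i _]; last by rewrite compL0 cast0 sgnr0.
by rewrite sgnr0 subr0 cast0.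
Qed.
End S.

Theorem proposition4p6 (R : comRingType)
  (char0 : forall n : nat, (0 < n)%N -> (n%:R : R) != 0)
  (O : nat -> lmodType R) (comp : compT O) (one : O 0%N)
  (HO : is_ns_operad comp one) :
  is_ns_operad_morphism (dend_comp comp) (dend_one one) comp one (phiD (O:=O))
  /\
  (forall pl pr : O 1%N, is_dend_mult comp pl pr ->
   let piD := dend_pair pl pr in
   let piT := pl + pr in
   (* phi_* is well defined on cohomology *)
   (forall n (x : Dend O n),
      cocycle (dend_comp comp) piD x -> cocycle comp piT (phiD x)) /\
   (forall n (x : Dend O n),
      coboundary (dend_comp comp) piD x -> coboundary comp piT (phiD x)) /\
   (* phi_* preserves the cup product in cohomology *)
   (forall m n (x : Dend O m) (y : Dend O n),
      cocycle (dend_comp comp) piD x -> cocycle (dend_comp comp) piD y ->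
      coboundary comp piT
        (phiD (gcup (dend_comp comp) piD x y) - gcup comp piT (phiD x) (phiD y))) /\
   (* phi_* preserves the Gerstenhaber bracket in cohomology *)
   (forall m n (x : Dend O m) (y : Dend O n),
      cocycle (dend_comp comp) piD x -> cocycle (dend_comp comp) piD y ->
      coboundary comp piT
        (phiD (gbrak (dend_comp comp) x y) - gbrak comp (phiD x) (phiD y)))).
Proof.
case: HO => HL HR _ _ _.
have Hdsum := @dsum_lin R O.
have Hcomp := @phi_comp R O comp HL HR.
split.
  split.
  - by move=> n a x y; exact: Hdsum.
  - by move=> m n i f g Hi; exact: Hcomp.
  - by rewrite /phiD /dsum big_ord1 ffunE.
move=> pl pr _ piD piT.
have Hpi : dsum piD = piT by rewrite /dsum /piD big_ord_recl big_ord1 !ffunE.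
have Hdelta n (x : Dend O n) : dsum (gdelta (dend_comp comp) piD x) = gdelta comp piT (dsum x).
  by rewrite dsum_delta // Hpi.
split.
  by move=> n x; rewrite /cocycle /phiD -Hdelta => ->; rewrite dsum0.
split.
  case=> [|k] x /=; first by move=> ->; rewrite /phiD dsum0.
  by case=> y ->; exists (dsum y); rewrite /phiD Hdelta.
split.
  move=> m n x y _ _; rewrite /phiD dsum_cup // Hpi subrr.
  exact: cob0.
move=> m n x y _ _; rewrite /phiD dsum_brak // subrr.
exact: cob0.
Qed.
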